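(* Let $X,Z$ be complex Banach spaces, $E\in L(X,Z)$, $A\colon\mathrm{dom}(A)\subseteq X\to Z$ closed and densely defined, and assume $(E,A)$ has a complex resolvent index $p_{\mathrm{res}}^{(E,A)}$; set $p:=p_{\mathrm{res}}^{(E,A)}+1$. Fix $\mu\in\rho(E,A)$, let $X_{\ker}:=\ker R_r(\mu)^p$, $Z_{\ker}:=\ker R_l(\mu)^p$, let $A_{\ker}:=A|_{\mathrm{dom}(A)\cap X_{\ker}}\colon \mathrm{dom}(A)\cap X_{\ker}\to Z_{\ker}$ (which has a bounded inverse $A_{\ker}^{-1}\colon Z_{\ker}\to X_{\ker}$) and $E_{\ker}:=E|_{X_{\ker}}\in L(X_{\ker},Z_{\ker})$. Let $f\in C^p([0,\infty);Z_{\ker})$. Then the equation $\frac{\mathrm d}{\mathrm dt}Ex(t)=Ax(t)+f(t)$, $t\in[0,\infty)$, has a classical solution given by $$x(t)=-\sum_{i=0}^pA_{\ker}^{-1}(E_{\ker}A_{\ker}^{-1})^if^{(i)}(t),\quad t\ge0.$$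
   Context: $\rho(E,A)$ is the set of $\lambda\in\mathbb C$ for which $\lambda E-A\colon\mathrm{dom}(A)\to Z$ is bijective with bounded inverse. $(E,A)$ has a complex resolvent index if there is a smallest $p_{\mathrm{res}}^{(E,A)}\in\mathbb N_0$ for which there exist $\omega\in\mathbb R$, $C>0$ with $\{\operatorname{Re}\lambda>\omega\}\subseteq\rho(E,A)$ and $\|(\lambda E-A)^{-1}\|\le C|\lambda|^{p_{\mathrm{res}}^{(E,A)}-1}$ for $\operatorname{Re}\lambda>\omega$. $R_r(\lambda):=(\lambda E-A)^{-1}E$, $R_l(\lambda):=E(\lambda E-A)^{-1}$. A classical solution of $\frac{\mathrm d}{\mathrm dt}Ex=Ax+f$ on $[0,\infty)$ is a function $x\in C([0,\infty);X)$ with $Ex\in C^1([0,\infty);Z)$, $x(t)\in\mathrm{dom}(A)$ for all $t\ge0$, satisfying the equation for all $t\ge0$. *)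

(* Defs.v *)
From HB Require Import structures.
From mathcomp Require Import all_boot all_order all_algebra.
From mathcomp Require Import all_classical all_reals all_analysis.
From mathcomp.real_closed Require complex.
Import complex.ComplexField.
Import Order.TTheory GRing.Theory Num.Theory.
Import numFieldNormedType.Exports.

Set Implicit Arguments.
Unset Strict Implicit.
Unset Printing Implicit Defensive.

Local Open Scope ring_scope.
Local Open Scope classical_set_scope.

Section Defs.
Variable R : realType.
Local Notation C := (complex.complex R).

Section OneSpace.
Variable V : normedModType C.

(** g : R -> V has right/two-sided derivative dg on [0, oo): at t = 0 the
    one-sided (right) derivative, at t > 0 the usual derivative, the
    difference quotient being scaled by the real number h^-1 seen in C. *)
Definition has_deriv_nonneg (g dg : R -> V) :=
  forall t : R, 0 <= t ->
    (fun h : R => (complex.real_complex R h)^-1 *: (g (t + h) - g t))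
      @ within [set h : R | h != 0 /\ 0 <= t + h] (nbhs (0 : R)) --> dg t.
End OneSpace.

Section TwoSpaces.
Variables X Z : normedModType C.

Definition lin_subspace (D : set X) :=
  D 0 /\ forall (a : C) x y, D x -> D y -> D (a *: x + y).

Definition linear_on (D : set X) (A : X -> Z) :=
  forall (a : C) x y, D x -> D y -> A (a *: x + y) = a *: A x + A y.

Definition closed_op (D : set X) (A : X -> Z) :=
  forall (u : nat -> X) (x : X) (y : Z),
    (forall n, D (u n)) -> u @ \oo --> x -> (A \o u) @ \oo --> y ->
    D x /\ A x = y.

Definition densely_defined (D : set X) := closure D = setT.

Definition is_resolvent (E : X -> Z) (D : set X) (A : X -> Z) (l : C)
    (Rl : Z -> X) :=
  [/\ forall z, D (Rl z) /\ l *: E (Rl z) - A (Rl z) = z,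
      forall x, D x -> Rl (l *: E x - A x) = x &
      exists M : C, forall z, `|Rl z| <= M * `|z| ].

Definition resolvent_set (E : X -> Z) (D : set X) (A : X -> Z) : set C :=
  [set l | exists Rl, is_resolvent E D A l Rl].

Definition resolvent_growth (E : X -> Z) (D : set X) (A : X -> Z) (p : nat) :=
  exists (w : R) (K : C), 0 < K /\
    forall l : C, w < complex.Re l ->
      exists Rl, is_resolvent E D A l Rl /\
        forall z, `|Rl z| <= K * `|l| ^ (p%:Z - 1) * `|z|.

Definition has_resolvent_index (E : X -> Z) (D : set X) (A : X -> Z)
    (pres : nat) :=
  resolvent_growth E D A pres /\
  forall q, resolvent_growth E D A q -> (pres <= q)%N.

(** kernels of R_r(mu)^p = ((mu E - A)^-1 E)^p and R_l(mu)^p = (E (mu E - A)^-1)^p *)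
Definition Xker (E : X -> Z) (Rmu : Z -> X) (p : nat) : set X :=
  [set x | iter p (Rmu \o E) x = 0].
Definition Zker (E : X -> Z) (Rmu : Z -> X) (p : nat) : set Z :=
  [set z | iter p (E \o Rmu) z = 0].

Definition classical_solution (E : X -> Z) (D : set X) (A : X -> Z)
    (f : R -> Z) (x : R -> X) :=
  {within `[0, +oo[, continuous x} /\
  exists dEx : R -> Z,
    [/\ has_deriv_nonneg (E \o x) dEx,
        {within `[0, +oo[, continuous dEx} &
        forall t : R, 0 <= t -> D (x t) /\ dEx t = A (x t) + f t].
End TwoSpaces.
End Defs.

(* Main.v *)
Require Import Defs.
From HB Require Import structures.
From mathcomp Require Import all_boot all_order all_algebra.
From mathcomp Require Import all_classical all_reals all_analysis.
From mathcomp.real_closed Require complex.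
Import complex.ComplexField.
Import Order.TTheory GRing.Theory Num.Theory.
Import numFieldNormedType.Exports.
Local Open Scope ring_scope.
Local Open Scope classical_set_scope.
Set Implicit Arguments.
Unset Strict Implicit.
Unset Printing Implicit Defensive.
Definition mkLin (K : pzRingType) (U V : lmodType K) (f : U -> V) (H : linear f) : {linear U -> V} :=
  HB.pack f (GRing.isLinear.Build K U V *:%R f H).

Lemma iter_linear (K : pzRingType) (U : lmodType K) (f : {linear U -> U}) n : linear (iter n f).
Proof.
elim: n => [|n IH] a x y //=.
by rewrite IH linearD linearZ.
Qed.

Definition iterL (K : pzRingType) (U : lmodType K) (f : {linear U -> U}) n : {linear U -> U} :=
  mkLin (iter_linear f n).

Lemma iter_comm (T : Type) (f g : T -> T) : (forall x, f (g x) = g (f x)) ->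
  forall n x, iter n f (g x) = g (iter n f x).
Proof. by move=> H; elim=> [|n IH] x //=; rewrite IH H. Qed.

Lemma iter_comp (T : Type) (f g : T -> T) : (forall x, f (g x) = g (f x)) ->
  forall n x, iter n (f \o g) x = iter n f (iter n g x).
Proof.
move=> H; elim=> [|n IH] x //=.
rewrite IH; congr (f _).
by rewrite -(iter_comm H) -iterS iterSr.
Qed.

Lemma cvg_sumF (T : Type) (F : set_system T) (FF : Filter F) (K : numFieldType)
  (V : normedModType K) n (f : 'I_n -> T -> V) (l : 'I_n -> V) :
  (forall i, f i @ F --> l i) -> (fun x => \sum_(i < n) f i x) @ F --> \sum_(i < n) l i.
Proof.
elim: n f l => [|n IH] f l H.
  rewrite big_ord0; under eq_fun do rewrite big_ord0; exact: cvg_cst.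
rewrite big_ord_recr /=; under eq_fun do rewrite big_ord_recr /=.
apply: (@cvgD _ _ _ _ FF (fun x => \sum_(i < n) f (widen_ord (leqnSn n) i) x) (f ord_max)).
  by apply: IH => i; apply: H.
exact: H.
Qed.

Section S.
Variable R : realType.
Local Notation C := (complex.complex R).

Lemma lin_bound (V W : normedModType C) (f : {linear V -> W}) : continuous f -> exists M : C, forall x, `|f x| <= M * `|x|.
Proof.
move=> /linear_bounded_continuous /linear_boundedP [M [Mr HM]].
exists (`|M| + 1); apply: HM.
by rewrite (le_lt_trans (real_ler_norm Mr)) // ltrDl.
Qed.

Lemma bound_cont (V W : normedModType C) (f : {linear V -> W}) : (exists M : C, forall x, `|f x| <= M * `|x|) -> continuous f.
Proof.
move=> [M HM]; apply/linear_bounded_continuous/linear_boundedP.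
near=> r => x.
apply: (le_trans (HM x)).
have h0 : 0 <= M * `|x| := le_trans (normr_ge0 _) (HM x).
rewrite -(ger0_norm h0) normrM normr_id ler_wpM2r //.
Unshelve. all: by end_near. Qed.

Lemma iter_cont (V : normedModType C) (f : V -> V) n : continuous f -> continuous (iter n f).
Proof.
move=> Hf; elim: n => [|n IH] x /=; first exact: cvg_id.
exact: (continuous_comp (IH x) (Hf _)).
Qed.

Definition dq (V : normedModType C) (g : R -> V) (t : R) := 
  fun h : R => (complex.real_complex R h)^-1 *: (g (t + h) - g t).

Lemma deriv_lin (V W : normedModType C) (L : {linear V -> W}) (g dg : R -> V) :
  continuous L -> has_deriv_nonneg g dg -> has_deriv_nonneg (L \o g) (L \o dg).
Proof.
move=> HL Hg t t0.
have -> : (fun h : R => (complex.real_complex R h)^-1 *: ((L \o g) (t + h) - (L \o g) t))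
   = L \o (fun h : R => (complex.real_complex R h)^-1 *: (g (t + h) - g t)).
  by apply: funext => h /=; rewrite [RHS]linearZ [in RHS]linearB.
exact: (cvg_comp _ _ (Hg t t0) (HL _)).
Qed.

Lemma deriv_sum (V : normedModType C) n (g dg : 'I_n -> R -> V) :
  (forall i, has_deriv_nonneg (g i) (dg i)) ->
  has_deriv_nonneg (fun t => \sum_(i < n) g i t) (fun t => \sum_(i < n) dg i t).
Proof.
move=> H t t0.
have -> : (fun h : R => (complex.real_complex R h)^-1 *: (\sum_(i < n) g i (t + h) - \sum_(i < n) g i t))
   = (fun h : R => \sum_(i < n) (complex.real_complex R h)^-1 *: (g i (t + h) - g i t)).
  by apply: funext => h /=; rewrite -sumrB scaler_sumr.
by apply: cvg_sumF => i; apply: H.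
Qed.

Lemma deriv_opp (V : normedModType C) (g dg : R -> V) :
  has_deriv_nonneg g dg -> has_deriv_nonneg (fun t => - g t) (fun t => - dg t).
Proof.
move=> H t t0.
have -> : (fun h : R => (complex.real_complex R h)^-1 *: (- g (t + h) - - g t))
   = (fun h : R => - ((complex.real_complex R h)^-1 *: (g (t + h) - g t))).
  by apply: funext => h /=; rewrite -scalerN opprB opprK addrC.
exact: cvgN (H t t0).
Qed.

Lemma deriv_ext (V : normedModType C) (g1 g2 dg : R -> V) :
  (forall t, 0 <= t -> g1 t = g2 t) ->
  has_deriv_nonneg g1 dg -> has_deriv_nonneg g2 dg.
Proof.
move=> E12 H t t0.
apply: cvg_trans (H t t0).
apply: near_eq_cvg.
apply: filterS (withinT _ _) => h [_ th] /=.
by rewrite !E12.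
Qed.

Lemma deriv_ker (V W : normedModType C) (P : {linear V -> W}) (g dg : R -> V) :
  continuous P -> (forall s, 0 <= s -> P (g s) = 0) ->
  has_deriv_nonneg g dg -> forall t, 0 <= t -> P (dg t) = 0.
Proof.
move=> HP Hg H t t0.
have H1 : (P \o (fun h : R => (complex.real_complex R h)^-1 *: (g (t + h) - g t))) @ (0:R)^'+ --> P (dg t).
  apply: cvg_comp; last exact: HP.
  apply: cvg_trans (H t t0).
  move=> Q; rewrite /= !nbhs_filterE /= /within => HQ; rewrite /at_right /within /=; move: HQ; apply: (@filterS R (nbhs (0:R)) _) => h HS hpos; apply: HS; split.
    by rewrite gt_eqF.
  by rewrite addr_ge0 // ltW.
have H2 : (P \o (fun h : R => (complex.real_complex R h)^-1 *: (g (t + h) - g t))) @ (0:R)^'+ --> (0 : W).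
  apply: cvg_trans (cvg_cst (0 : W)).
  apply: near_eq_cvg; near=> h => /=.
  rewrite linearZZ linearB !Hg ?subrr ?scaler0 //.
  by apply: addr_ge0 => //; apply: ltW; near: h; exact: nbhs_right_gt.
  exact: at_right_proper_filter.
exact: (@cvg_unique W (@norm_hausdorff _ W) _ _ _ _ H1 H2).
Unshelve. all: by end_near. Qed.

Lemma within_comp (V W : normedModType C) (A : set R) (G : V -> W) (g : R -> V) :
  continuous G -> {within A, continuous g} -> {within A, continuous (G \o g)}.
Proof. by move=> HG Hg y; have H := continuous_comp (@Hg y) (@HG _); exact: H. Qed.

Lemma within_sum (V : normedModType C) (A : set R) n (g : 'I_n -> R -> V) :
  (forall i, {within A, continuous (g i)}) -> {within A, continuous (fun t => \sum_(i < n) g i t)}.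
Proof. by move=> H y; apply: cvg_sumF => i; exact: H. Qed.

Lemma within_opp (V : normedModType C) (A : set R) (g : R -> V) :
  {within A, continuous g} -> {within A, continuous (fun t => - g t)}.
Proof. by move=> H y; exact: cvgN (H y). Qed.
End S.

Lemma comp_linear (K : pzRingType) (U V W : lmodType K) (f : {linear U -> V}) (g : {linear V -> W}) :
  linear (g \o f).
Proof. by move=> a x y /=; rewrite !linearP. Qed.

Lemma tele (K : comPzRingType) (V : lmodType K) (f : {linear V -> V}) (mu : K) v n :
  - \sum_(k < n) mu ^+ k *: iter k f (mu *: f v - v) = v - mu ^+ n *: iter n f v.
Proof.
have H k : mu ^+ k *: iter k f (mu *: f v - v) =
   mu ^+ k.+1 *: iter k.+1 f v - mu ^+ k *: iter k f v.
  have -> : iter k f (mu *: f v - v) = iterL f k (mu *: f v - v) by [].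
  rewrite linearB linearZZ /= -iterSr.
  by rewrite scalerBr scalerA -exprSr.
under eq_bigr do rewrite H.
rewrite -(big_mkord xpredT (fun k => mu ^+ k.+1 *: iter k.+1 f v - mu ^+ k *: iter k f v)).
rewrite (telescope_sumr (fun k => mu ^+ k *: iter k f v)) //.
by rewrite expr0 scale1r opprB.
Qed.

Section Main.
Variable R : realType.
Local Notation C := (complex.complex R).
Variables (X Z : normedModType C) (E : {linear X -> Z}) (D : set X) (A : X -> Z)
  (mu : C) (Rmu : Z -> X).
Hypotheses (Econt : continuous E) (HD : lin_subspace D) (HA : linear_on D A)
  (HR : is_resolvent E D A mu Rmu).

Lemma D0 : D 0. Proof. by case: HD. Qed.
Lemma DZ a x y : D x -> D y -> D (a *: x + y). Proof. by case: HD => _; apply. Qed.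
Lemma DN x : D x -> D (- x).
Proof. by move=> Dx; rewrite -scaleN1r -[_ *: x]addr0; apply: DZ => //; exact: D0. Qed.
Lemma Dsum n (F : 'I_n -> X) : (forall i, D (F i)) -> D (\sum_(i < n) F i).
Proof.
elim: n F => [|n IH] F H; first by rewrite big_ord0; exact: D0.
by rewrite big_ord_recr /= -[X in X + _]scale1r; apply: DZ => //; apply: IH.
Qed.

Lemma A0 : A 0 = 0.
Proof.
have H := HA 1 D0 D0; rewrite scaler0 addr0 scale1r in H.
by apply: (@addrI _ (A 0)); rewrite addr0 -H.
Qed.
Lemma AN x : D x -> A (- x) = - A x.
Proof.
move=> Dx; have H := HA (-1) Dx D0; by rewrite addr0 A0 addr0 !scaleN1r in H.
Qed.
Lemma Asum n (F : 'I_n -> X) : (forall i, D (F i)) -> A (\sum_(i < n) F i) = \sum_(i < n) A (F i).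
Proof.
elim: n F => [|n IH] F H; first by rewrite !big_ord0 A0.
rewrite !big_ord_recr /= -[X in A (X + _)]scale1r HA ?scale1r ?IH //.
exact: Dsum.
Qed.

Lemma R1 z : D (Rmu z) /\ mu *: E (Rmu z) - A (Rmu z) = z.
Proof. by case: HR. Qed.
Lemma R2 x : D x -> Rmu (mu *: E x - A x) = x.
Proof. by case: HR => _ H _; apply: H. Qed.

Lemma Rlin : linear Rmu.
Proof.
move=> a z1 z2.
have Dx : D (a *: Rmu z1 + Rmu z2) by apply: DZ; apply: (R1 _).1.
rewrite -[RHS](R2 Dx); congr Rmu.
rewrite linearP HA; try exact: (R1 _).1.
rewrite -[in LHS](R1 z1).2 -[in LHS](R1 z2).2 scalerBr scalerDr !scalerA [a * mu]mulrC.
by rewrite opprD addrACA.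
Qed.

Definition RL := mkLin Rlin.

Lemma Rcont : continuous RL.
Proof.
apply: bound_cont; case: HR => _ _ [M HM]; by exists M.
Qed.

Lemma Rinj w : Rmu w = 0 -> w = 0.
Proof.
move=> H; rewrite -(R1 w).2 H.
by rewrite linear0 scaler0 A0 subrr.
Qed.

Lemma RA x : D x -> Rmu (A x) = mu *: Rmu (E x) - x.
Proof.
move=> Dx; have := R2 Dx.
have -> : Rmu (mu *: E x - A x) = RL (mu *: E x - A x) by [].
rewrite linearB linearZZ /=.
set y := Rmu (E x); set w := Rmu (A x); move=> <-.
by rewrite opprB addrC subrK.
Qed.

Lemma AR z : A (Rmu z) = mu *: E (Rmu z) - z.
Proof.
have := (R1 z).2; set a := A (Rmu z); set e := E (Rmu z); move=> <-.
by rewrite opprB addrC subrK.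
Qed.


Definition Rl : {linear Z -> Z} := mkLin (comp_linear RL E).
Definition Rr : {linear X -> X} := mkLin (comp_linear E RL).
Lemma Rlcont : continuous Rl.
Proof. by move=> z; have H := continuous_comp (@Rcont z) (@Econt _); exact: H. Qed.

Variable p : nat.
Definition S_ (z : Z) : Z := - \sum_(k < p) mu ^+ k *: iter k Rl z.
Lemma S_lin : linear S_.
Proof.
move=> a x y; rewrite /S_.
rewrite (eq_bigr (fun k : 'I_p => a *: (mu ^+ k *: iter k Rl x) + mu ^+ k *: iter k Rl y)).
  by rewrite big_split /= -scaler_sumr scalerN opprD.
move=> k _; rewrite (iter_linear Rl k) scalerDr !scalerA; congr (_ *: _ + _).
exact: mulrC.
Qed.
Definition SL := mkLin S_lin.
Lemma Scont : continuous SL.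
Proof.
move=> z; apply: cvgN; apply: cvg_sumF => k.
apply: cvgZ; first exact: cvg_cst.
exact: (@iter_cont _ _ _ k Rlcont).
Qed.
Definition Ainv : {linear Z -> X} := mkLin (comp_linear SL RL).
Definition T : {linear Z -> Z} := mkLin (comp_linear Ainv E).
Lemma Acont : continuous Ainv.
Proof. by move=> z; have H := continuous_comp (@Scont z) (@Rcont _); exact: H. Qed.
Lemma Tcont : continuous T.
Proof. by move=> z; have H := continuous_comp (@Acont z) (@Econt _); exact: H. Qed.

Lemma S_comm z : Rl (S_ z) = S_ (Rl z).
Proof.
rewrite /S_ linearN linear_sum; congr (- _); apply: eq_bigr => k _.
by rewrite linearZZ /= -iterSr.
Qed.

Definition Zk z := iter p Rl z = 0.

Lemma iterRR n w : iter n Rr (Rmu w) = Rmu (iter n Rl w).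
Proof. by elim: n => //= n ->. Qed.
Lemma iterLE n y : iter n Rl (E y) = E (iter n Rr y).
Proof. by elim: n => //= n ->. Qed.

Lemma Ainv_D z : D (Ainv z).
Proof. exact: (R1 _).1. Qed.

Lemma Ainv_X z : Zk z -> iter p Rr (Ainv z) = 0.
Proof.
move=> Hz; change (iter p Rr (Rmu (S_ z)) = 0).
rewrite iterRR (iter_comm S_comm) Hz.
have -> : S_ 0 = 0 := linear0 SL.
exact: (linear0 RL).
Qed.

Lemma ARinv z : Zk z -> A (Ainv z) = z.
Proof.
move=> Hz; change (A (Rmu (S_ z)) = z); rewrite AR.
change (mu *: Rl (S_ z) - S_ z = z); rewrite S_comm.
have -> : mu *: S_ (Rl z) - S_ z = SL (mu *: Rl z - z) by rewrite linearB linearZZ.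
by rewrite /= /S_ tele Hz scaler0 subr0.
Qed.

Lemma AinvA x : D x -> iter p Rr x = 0 -> Zk (A x) /\ Ainv (A x) = x.
Proof.
move=> Dx Hx; split.
  rewrite /Zk; move: Hx; case: p => [|n] Hx.
    by move: Hx => /= ->; rewrite A0.
  have E0 : E (iter n Rr x) = 0 by apply: Rinj; exact: Hx.
  rewrite iterSr; change (iter n Rl (E (Rmu (A x))) = 0); rewrite RA // iterLE.
  change (E (iterL Rr n (mu *: Rr x - x)) = 0).
  rewrite !linearB linearZZ /= -iterSr.
  change (E (mu *: iter n.+1 Rr x) - E (iter n Rr x) = 0).
  by rewrite Hx E0 scaler0 linear0 subrr.
change (RL (S_ (A x)) = x); rewrite /S_ linearN linear_sum.
rewrite (eq_bigr (fun k : 'I_p => mu ^+ k *: iter k Rr (mu *: Rr x - x))).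
  by rewrite tele Hx scaler0 subr0.
move=> k _; rewrite linearZZ /=; congr (_ *: _).
by rewrite -iterRR RA.
Qed.

Lemma Zk_T z : Zk z -> Zk (T z).
Proof.
move=> Hz; rewrite /Zk; change (iter p Rl (Rl (S_ z)) = 0).
have H : forall y, Rl ((Rl \o S_) y) = (Rl \o S_) (Rl y) by move=> y; exact: (congr1 Rl (S_comm y)).
have := iter_comm H p z; rewrite /= => ->.
rewrite Hz.
have -> : S_ 0 = 0 := linear0 SL.
exact: (linear0 Rl).
Qed.

Lemma T_nil z : Zk z -> iter p T z = 0.
Proof.
move=> Hz; change (iter p (Rl \o S_) z = 0).
rewrite (iter_comp S_comm).
have H1 : forall y, S_ (Rl y) = Rl (S_ y) by move=> y; rewrite S_comm.
have H2 : forall y, Rl (iter p S_ y) = iter p S_ (Rl y) by move=> y; rewrite (iter_comm H1).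
rewrite (iter_comm H2) Hz.
exact: (linear0 (iterL SL p)).
Qed.


Lemma main_sol (f : R -> Z) (fs : nat -> R -> Z) :
  fs 0%N = f ->
  (forall i, (i < p)%N -> has_deriv_nonneg (fs i) (fs i.+1)) ->
  (forall i, (i <= p)%N -> {within `[0, +oo[, continuous (fs i)}) ->
  (forall t, 0 <= t -> Zk (f t)) ->
  classical_solution E D A f (fun t => - \sum_(i < p.+1) Ainv (iter i (E \o Ainv) (fs i t))).
Proof.
move=> f0 Hder Hcont Hf.
have fsZ : forall i, (i <= p)%N -> forall t, 0 <= t -> Zk (fs i t).
  elim=> [|i IH] Hi t t0; first by rewrite f0; apply: Hf.
  apply: (@deriv_ker _ _ _ (iterL Rl p) (fs i) (fs i.+1)) (t0).
  - exact: (@iter_cont _ _ _ p Rlcont).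
  - by move=> s s0; exact: IH (ltnW Hi) s s0.
  - exact: Hder.
have wZ : forall i, (i <= p)%N -> forall t, 0 <= t -> forall j, Zk (iter j T (fs i t)).
  move=> i Hi t t0; elim=> [|j IH]; [exact: fsZ | exact: Zk_T].
split.
  apply: within_opp; apply: within_sum => i.
  apply: (within_comp (G := fun z => Ainv (iter i T z)) (g := fs i)); last exact: Hcont (ltn_ord i).
  by move=> z; have H := continuous_comp (@iter_cont _ _ _ i Tcont z) (@Acont _); exact: H.
exists (fun t => - \sum_(i < p) iter i.+1 T (fs i.+1 t)); split.
- apply: (@deriv_ext _ _ (fun t => - \sum_(i < p) iter i.+1 T (fs i t))).
    move=> t t0.
    change (- \sum_(i < p) iter i.+1 T (fs i t) = E (- \sum_(i < p.+1) Ainv (iter i T (fs i t)))).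
    rewrite (raddfN E) (raddf_sum E) big_ord_recr.
    rewrite [X in _ = - (_ + X)](_ : _ = 0); last first.
      by change (E (Ainv (iter p T (fs p t))) = 0); rewrite T_nil ?linear0 //; exact: fsZ.
    by rewrite addr0; congr (- _); apply: eq_bigr => i _.
  apply: deriv_opp; apply: deriv_sum => i.
  exact: (deriv_lin (L := iterL T i.+1) (@iter_cont _ _ _ i.+1 Tcont) (Hder i (ltn_ord i))).
- apply: within_opp; apply: within_sum => i.
  apply: (within_comp (G := iter i.+1 T) (g := fs i.+1)); last exact: Hcont (ltn_ord i).
  exact: (@iter_cont _ _ _ i.+1 Tcont).
move=> t t0; split.
  by apply: DN; apply: Dsum => i; exact: Ainv_D.
rewrite AN; last by apply: Dsum => i; exact: Ainv_D.
rewrite Asum; last by move=> i; exact: Ainv_D.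
rewrite (eq_bigr (fun i : 'I_p.+1 => iter i T (fs i t))); last first.
  by move=> i _; apply: ARinv; exact: wZ (ltn_ord i) t t0 i.
rewrite big_ord_recl.
rewrite [X in - (X + _)](_ : _ = f t); last by rewrite /= f0.
rewrite opprD addrAC addNr add0r; congr (- _); apply: eq_bigr => i _.
Qed.

End Main.

Theorem proposition3p3 (R : realType)
  (X Z : completeNormedModType (complex.complex R))
  (E : {linear X -> Z}) (D : set X) (A : X -> Z) (pres : nat)
  (mu : complex.complex R) (Rmu : Z -> X)
  (f : R -> Z) (fs : nat -> R -> Z) :
  continuous E ->
  lin_subspace D -> linear_on D A -> closed_op D A -> densely_defined D ->
  has_resolvent_index E D A pres ->
  is_resolvent E D A mu Rmu ->
  (* f in C^p([0,oo); Z_ker), p = pres + 1, with derivatives fs i *)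
  fs 0%N = f ->
  (forall i : nat, (i < pres.+1)%N -> has_deriv_nonneg (fs i) (fs i.+1)) ->
  (forall i : nat, (i <= pres.+1)%N -> {within `[0, +oo[, continuous (fs i)}) ->
  (forall t : R, 0 <= t -> Zker E Rmu pres.+1 (f t)) ->
  exists Ainv : Z -> X,
    [/\ (forall z, Zker E Rmu pres.+1 z ->
           [/\ D (Ainv z), Xker E Rmu pres.+1 (Ainv z) & A (Ainv z) = z]),
        (forall x, D x -> Xker E Rmu pres.+1 x ->
           Zker E Rmu pres.+1 (A x) /\ Ainv (A x) = x),
        (exists M : complex.complex R,
           forall z, Zker E Rmu pres.+1 z -> `|Ainv z| <= M * `|z|) &
        classical_solution E D A f
          (fun t => - \sum_(i < pres.+2) Ainv (iter i (E \o Ainv) (fs i t)))].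
Proof.
move=> Ec HD HA _ _ _ HR f0 Hder Hcont Hf.
exists (Ainv HD HA HR pres.+1); split.
- move=> z Hz; split.
  + exact: Ainv_D.
  + exact: (Ainv_X (p := pres.+1) Hz).
  + exact: (ARinv (p := pres.+1) Hz).
- by move=> x Dx Hx; exact: (AinvA (p := pres.+1) Dx Hx).
- have HAc := @Acont _ _ _ _ _ _ _ _ Ec HD HA HR pres.+1.
  have [M HM] := lin_bound HAc.
  by exists M => z _; exact: HM.
- exact: (main_sol Ec f0 Hder Hcont Hf).
Qed.
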